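(* Let $\mathcal{B}$ and $\mathcal{C}$ be algebras in a functional language $\mathcal{L}$. If $\mathrm{Th}_{\exists}(\mathcal{B})\supseteq\mathrm{Th}_{\exists}(\mathcal{C})$, then $\mathcal{C}$ is isomorphic to some limit algebra over $\mathcal{B}$.
   Context: Functional language: operation symbols $F$ (arity $n_F$) and constants only. $\mathrm{Th}_\exists(\mathcal{M})$ is the set of existential $\mathcal{L}$-sentences true in $\mathcal{M}$. A diagram-formula in a finite reduct $\mathcal{L}'$ of $\mathcal{L}$ in finite variables $X$ is a conjunction of atomic formulas and negations such that $\neg(x=y)$ is a conjunct for distinct $x,y\in X$, for each $F\in\mathcal{L}'$ and $(x_0,\dots,x_{n_F})\in X^{n_F+1}$ exactly one of $F(x_1,\dots,x_{n_F})=x_0$ and its negation is a conjunct, and for each constant $c\in\mathcal{L}'$ and $x\in X$ exactly one of $x=c$, $\neg(x=c)$ is a conjunct. A direct system of formulas $\Lambda=(I,\varphi_i,\gamma_{ij})$: $(I,\le)$ directed; $\varphi_i$ consistent diagram-formulas in finite reducts $\mathcal{L}_i$ and finite variables $X_i$; maps $\gamma_{ij}:X_i\to X_j$ ($i\le j$) with $\gamma_{ii}=\mathrm{id}$, $\gamma_{jk}\gamma_{ij}=\gamma_{ik}$, conjuncts of $\varphi_i(\gamma_{ij}(X_i))$ are conjuncts of $\varphi_j$; every constant appears in a conjunct $x=c$ of some $\varphi_i$; for every $F,i,(x_1,\dots,x_{n_F})\in X_i^{n_F}$ some $j\ge i$ has a conjunct $F(\gamma_{ij}(x_1),\dots,\gamma_{ij}(x_{n_F}))=x_j$.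 The limit algebra $L(\Lambda)$ has universe $\{(x,i):x\in X_i\}/\!\equiv$, $(x,i)\equiv(y,j)$ iff $\gamma_{ik}(x)=\gamma_{jk}(y)$ for some $k\ge i,j$, with constants and operations read off from the conjuncts $x=c$ and $F(\dots)=x_j$ (well defined). It is a limit algebra over $\mathcal{B}$ if each $\varphi_i$ is true in $\mathcal{B}$ under some assignment $X_i\to B$. *)

(* Defs.v *)
From mathcomp Require Import all_boot.
From Stdlib Require List.

Set Implicit Arguments.
Unset Strict Implicit.
Unset Printing Implicit Defensive.

Record language := Language {
  Fsym : Type;
  ar : Fsym -> nat;
  Csym : Type }.

Record algebra (L : language) := Algebra {
  carrier :> Type;
  fint : forall F : Fsym L, (ar F).-tuple carrier -> carrier;
  cint : Csym L -> carrier }.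

Arguments fint {L} a F _.
Arguments cint {L} a c.

Definition isomorphism (L : language) (A B : algebra L) (f : A -> B) : Prop :=
  bijective f /\
  (forall c : Csym L, f (cint A c) = cint B c) /\
  (forall (F : Fsym L) (t : (ar F).-tuple A),
      f (fint A F t) = fint B F (map_tuple f t)).

Definition isomorphic (L : language) (A B : algebra L) : Prop :=
  exists f : A -> B, isomorphism f.

Inductive term (L : language) (V : Type) : Type :=
  | TVar : V -> term L V
  | TCst : Csym L -> term L V
  | TApp : forall F : Fsym L, ('I_(ar F) -> term L V) -> term L V.

Inductive qf_formula (L : language) (V : Type) : Type :=
  | QEq : term L V -> term L V -> qf_formula L V
  | QNot : qf_formula L V -> qf_formula L V
  | QAnd : qf_formula L V -> qf_formula L V -> qf_formula L V
  | QOr : qf_formula L V -> qf_formula L V -> qf_formula L V.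

Fixpoint eval_term (L : language) (V : Type) (A : algebra L) (v : V -> A)
    (t : term L V) : A :=
  match t with
  | TVar x => v x
  | TCst c => cint A c
  | TApp F args => fint A F [tuple @eval_term L V A v (args k) | k < ar F]
  end.

Fixpoint holds_qf (L : language) (V : Type) (A : algebra L) (v : V -> A)
    (f : qf_formula L V) : Prop :=
  match f with
  | QEq t1 t2 => eval_term v t1 = eval_term v t2
  | QNot g => ~ @holds_qf L V A v g
  | QAnd g h => @holds_qf L V A v g /\ @holds_qf L V A v h
  | QOr g h => @holds_qf L V A v g \/ @holds_qf L V A v h
  end.

Record ex_sentence (L : language) := ExSentence {
  nvars : nat;
  matrix : qf_formula L 'I_nvars }.

Definition holds_ex (L : language) (A : algebra L) (s : ex_sentence L) : Prop :=
  exists v : 'I_(nvars s) -> A, holds_qf v (matrix s).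

Definition Th_ex_incl (L : language) (C B : algebra L) : Prop :=
  forall s : ex_sentence L, holds_ex C s -> holds_ex B s.

Inductive lit (L : language) (X : Type) : Type :=
  | LEq : X -> X -> lit L X
  | LNeq : X -> X -> lit L X
  | LFun : forall F : Fsym L, (ar F).-tuple X -> X -> lit L X
  | LNFun : forall F : Fsym L, (ar F).-tuple X -> X -> lit L X
  | LCst : Csym L -> X -> lit L X
  | LNCst : Csym L -> X -> lit L X.

Definition map_lit (L : language) (X Y : Type) (g : X -> Y) (l : lit L X)
    : lit L Y :=
  match l with
  | LEq x y => LEq L (g x) (g y)
  | LNeq x y => LNeq L (g x) (g y)
  | LFun F xs x0 => LFun (map_tuple g xs) (g x0)
  | LNFun F xs x0 => LNFun (map_tuple g xs) (g x0)
  | LCst c x => LCst c (g x)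
  | LNCst c x => LNCst c (g x)
  end.

Definition holds_lit (L : language) (X : Type) (A : algebra L) (v : X -> A)
    (l : lit L X) : Prop :=
  match l with
  | LEq x y => v x = v y
  | LNeq x y => v x <> v y
  | LFun F xs x0 => fint A F (map_tuple v xs) = v x0
  | LNFun F xs x0 => fint A F (map_tuple v xs) <> v x0
  | LCst c x => v x = cint A c
  | LNCst c x => v x <> cint A c
  end.

Definition conj_formula (L : language) (X : Type) := list (lit L X).

Definition sat (L : language) (X : Type) (A : algebra L) (v : X -> A)
    (phi : conj_formula L X) : Prop :=
  forall l, List.In l phi -> holds_lit v l.

Definition consistent (L : language) (X : Type) (phi : conj_formula L X) : Prop :=
  exists (A : algebra L) (v : X -> A), sat v phi.

(** A finite reduct L' of L, given by predicates on the symbols. *)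
Definition finite_pred (T : Type) (P : T -> Prop) : Prop :=
  exists s : list T, forall t, P t -> List.In t s.

Definition lit_in_reduct (L : language) (X : Type)
    (pF : Fsym L -> Prop) (pC : Csym L -> Prop) (l : lit L X) : Prop :=
  match l with
  | LFun F _ _ | LNFun F _ _ => pF F
  | LCst c _ | LNCst c _ => pC c
  | _ => True
  end.

Definition is_diagram (L : language) (X : finType)
    (pF : Fsym L -> Prop) (pC : Csym L -> Prop) (phi : conj_formula L X) : Prop :=
  finite_pred pF /\ finite_pred pC /\
  (forall l, List.In l phi -> lit_in_reduct pF pC l) /\
  (forall x y : X, x <> y -> List.In (LNeq L x y) phi) /\
  (forall F : Fsym L, pF F -> forall (xs : (ar F).-tuple X) (x0 : X),
      (List.In (LFun xs x0) phi <-> ~ List.In (LNFun xs x0) phi)) /\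
  (forall c : Csym L, pC c -> forall x : X,
      (List.In (LCst c x) phi <-> ~ List.In (LNCst c x) phi)).

Record dsys (L : language) := DSys {
  ds_I : Type;
  ds_le : ds_I -> ds_I -> Prop;
  ds_X : ds_I -> finType;
  ds_pF : ds_I -> Fsym L -> Prop;
  ds_pC : ds_I -> Csym L -> Prop;
  ds_phi : forall i, conj_formula L (ds_X i);
  ds_gam : forall i j, ds_X i -> ds_X j }.

Arguments ds_le {L} d _ _.
Arguments ds_pF {L} d _ _.
Arguments ds_pC {L} d _ _.
Arguments ds_X {L} d _.
Arguments ds_phi {L} d i.
Arguments ds_gam {L} d i j _.

Definition directed (I : Type) (le : I -> I -> Prop) : Prop :=
  inhabited I /\
  (forall i, le i i) /\
  (forall i j k, le i j -> le j k -> le i k) /\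
  (forall i j, exists k, le i k /\ le j k).

Definition is_direct_system (L : language) (D : dsys L) : Prop :=
  directed (ds_le D) /\
  (forall i, is_diagram (ds_pF D i) (ds_pC D i) (ds_phi D i)) /\
  (forall i, consistent (ds_phi D i)) /\
  (forall i (x : ds_X D i), ds_gam D i i x = x) /\
  (forall i j k, ds_le D i j -> ds_le D j k ->
     forall x, ds_gam D j k (ds_gam D i j x) = ds_gam D i k x) /\
  (forall i j, ds_le D i j ->
     forall l, List.In l (ds_phi D i) -> List.In (map_lit (ds_gam D i j) l) (ds_phi D j)) /\
  (forall c : Csym L, exists i (x : ds_X D i), List.In (LCst c x) (ds_phi D i)) /\
  (forall (F : Fsym L) i (xs : (ar F).-tuple (ds_X D i)),
     exists j (x : ds_X D j), ds_le D i j /\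
       List.In (LFun (map_tuple (ds_gam D i j) xs) x) (ds_phi D j)).

Definition ds_elt (L : language) (D : dsys L) := {i : ds_I D & ds_X D i}.

Definition ds_equiv (L : language) (D : dsys L) (a b : ds_elt D) : Prop :=
  exists k, ds_le D (projT1 a) k /\ ds_le D (projT1 b) k /\
    ds_gam D (projT1 a) k (projT2 a) = ds_gam D (projT1 b) k (projT2 b).

(** The algebra A, together with pi : {(x,i)} -> A, is (a presentation of)
    the limit algebra L(D): pi is onto with kernel exactly the equivalence
    ==, i.e. A is the quotient {(x,i)}/==, and the constants and operations
    of A are those read off from the conjuncts x = c and
    F(gamma_ij(x_1),...,gamma_ij(x_n)) = x_j. *)
Definition is_limit_algebra (L : language) (D : dsys L) (A : algebra L)
    (pi : ds_elt D -> A) : Prop :=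
  (forall a : A, exists e, pi e = a) /\
  (forall e1 e2, pi e1 = pi e2 <-> ds_equiv e1 e2) /\
  (forall c i (x : ds_X D i), List.In (LCst c x) (ds_phi D i) ->
      cint A c = pi (existT _ i x)) /\
  (forall F i j (xs : (ar F).-tuple (ds_X D i)) (x0 : ds_X D j),
      ds_le D i j ->
      List.In (LFun (map_tuple (ds_gam D i j) xs) x0) (ds_phi D j) ->
      fint A F (map_tuple (fun x => pi (existT _ i x)) xs) = pi (existT _ j x0)).

Definition sys_over (L : language) (D : dsys L) (B : algebra L) : Prop :=
  forall i, exists v : ds_X D i -> B, sat v (ds_phi D i).

Arguments is_direct_system {L} D.
Arguments sys_over {L} D B.
Arguments is_limit_algebra {L} D A pi.
Arguments Th_ex_incl {L} C B.
Arguments isomorphic {L} A B.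
Arguments ds_elt {L} D.

(* Main.v *)
Require Import Defs.
From mathcomp Require Import all_boot.
From Stdlib Require List.
From HB Require Import structures.
From Stdlib Require Import ClassicalEpsilon Classical.

Set Implicit Arguments. Unset Strict Implicit. Unset Printing Implicit Defensive.

Definition dec (P : Prop) : bool :=
  if excluded_middle_informative P then true else false.
Lemma decP (P : Prop) : dec P <-> P.
Proof. rewrite /dec; case: excluded_middle_informative => h; split=> //. Qed.

Lemma In_mem (T : eqType) (x : T) (s : seq T) : List.In x s <-> x \in s.
Proof.
elim: s => [|a s IH] /=; first by split.
rewrite in_cons; split.
- by case=> [->|/IH ->]; rewrite ?eqxx ?orbT.
- by case/orP=> [/eqP ->|/IH]; [left|right].
Qed.

Lemma In_enum (T : finType) (x : T) : List.In x (enum T).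
Proof. by apply/In_mem; rewrite mem_enum. Qed.

Lemma ord0_absurd (P : Type) (x : 'I_0) : P.
Proof. by case: x. Qed.

Lemma mt_comp (A B' D' : Type) n (f : A -> B') (g : B' -> D') (t : n.-tuple A) :
  map_tuple g (map_tuple f t) = map_tuple (fun x => g (f x)) t.
Proof. by apply: val_inj; rewrite /= -map_comp. Qed.

Lemma mt_ext (A B' : Type) n (f g : A -> B') (t : n.-tuple A) :
  (forall x, f x = g x) -> map_tuple f t = map_tuple g t.
Proof. by move=> h; apply: val_inj; rewrite /=; apply: eq_map. Qed.

Section Main.
Variables (L : language) (C : algebra L).

Definition CT : Type := carrier C.
Definition ceqb (a b : CT) : bool := dec (a = b).
Lemma ceqP : Equality.axiom ceqb.
Proof. move=> a b; apply: (iffP idP) => [/decP //|h]; exact/decP. Qed.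
HB.instance Definition _ := hasDecEq.Build CT ceqP.

Record idx := Idx { s_ : seq CT; fs_ : seq (Fsym L); cs_ : seq (Csym L);
  su_ : uniq s_; sne_ : s_ <> [::] \/ (CT -> False) }.

Definition X (i : idx) : finType := 'I_(size (s_ i)).
Definition v (i : idx) (x : X i) : CT := tnth (in_tuple (s_ i)) x.

Lemma pos_size (i : idx) (c : CT) : 0 < size (s_ i).
Proof.
case: i => s fs cs _ [h|h] /=; last by case: (h c).
by case: s h => // h; case: h.
Qed.

Definition g (j : idx) (c : CT) : X j :=
  insubd (Ordinal (pos_size j c)) (index c (s_ j)).
Definition gam (i j : idx) (x : X i) : X j := g j (v x).

Lemma v_g j c : c \in s_ j -> v (g j c) = c.
Proof. by move=> h; rewrite /v (tnth_nth c) /= val_insubd index_mem h nth_index. Qed.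

Lemma v_in i (x : X i) : v x \in s_ i.
Proof. exact: mem_tnth. Qed.

Lemma v_inj i : injective (@v i).
Proof.
move=> x y e; have [d _] : exists d : CT, True by exists (v x).
apply: val_inj; apply/eqP.
rewrite -(nth_uniq d (ltn_ord x) (ltn_ord y) (su_ i)).
by move: e; rewrite /v !(tnth_nth d) /= => ->.
Qed.

Lemma g_v i (x : X i) : g i (v x) = x.
Proof. by apply: v_inj; rewrite v_g // v_in. Qed.

Definition le (i j : idx) := {subset s_ i <= s_ j} /\
  List.incl (fs_ i) (fs_ j) /\ List.incl (cs_ i) (cs_ j).

Lemma v_gam i j (x : X i) : le i j -> v (@gam i j x) = v x.
Proof. by case=> h _; rewrite /gam v_g // h // v_in. Qed.


Definition all_lits (i : idx) : list (lit L (X i)) :=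
  List.app (List.flat_map (fun x => List.flat_map (fun y => [:: LEq L x y; LNeq L x y])
            (enum (X i))) (enum (X i)))
  (List.app (List.flat_map (fun F => List.flat_map (fun xs =>
       List.flat_map (fun x0 => [:: LFun xs x0; LNFun xs x0]) (enum (X i)))
       (enum {: (ar F).-tuple (X i)})) (fs_ i))
   (List.flat_map (fun c => List.flat_map (fun x => [:: LCst c x; LNCst c x])
            (enum (X i))) (cs_ i))).

Definition red (i : idx) (l : lit L (X i)) :=
  lit_in_reduct (fun F => List.In F (fs_ i)) (fun c => List.In c (cs_ i)) l.

Lemma in_all i l : List.In l (all_lits i) <-> red l.
Proof.
split.
- rewrite !List.in_app_iff; case=> [|[]].
  + move/List.in_flat_map => [x [_ /List.in_flat_map [y [_ h]]]].
    by case: h => [<-|[<-|[]]].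
  + move/List.in_flat_map => [F [hF /List.in_flat_map [xs [_ /List.in_flat_map [x0 [_ h]]]]]].
    by case: h => [<-|[<-|[]]].
  + move/List.in_flat_map => [c [hc /List.in_flat_map [x [_ h]]]].
    by case: h => [<-|[<-|[]]].
- rewrite !List.in_app_iff.
  case: l => [x y|x y|F xs x0|F xs x0|c x|c x] /= h.
  + left; apply/List.in_flat_map; exists x; split; first exact: In_enum.
    apply/List.in_flat_map; exists y; split; first exact: In_enum. by left.
  + left; apply/List.in_flat_map; exists x; split; first exact: In_enum.
    apply/List.in_flat_map; exists y; split; first exact: In_enum. by right; left.
  + right; left; apply/List.in_flat_map; exists F; split => //.
    apply/List.in_flat_map; exists xs; split; first exact: In_enum.
    apply/List.in_flat_map; exists x0; split; first exact: In_enum. by left.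
  + right; left; apply/List.in_flat_map; exists F; split => //.
    apply/List.in_flat_map; exists xs; split; first exact: In_enum.
    apply/List.in_flat_map; exists x0; split; first exact: In_enum. by right; left.
  + right; right; apply/List.in_flat_map; exists c; split => //.
    apply/List.in_flat_map; exists x; split; first exact: In_enum. by left.
  + right; right; apply/List.in_flat_map; exists c; split => //.
    apply/List.in_flat_map; exists x; split; first exact: In_enum. by right; left.
Qed.

Definition phi (i : idx) : list (lit L (X i)) :=
  List.filter (fun l => dec (holds_lit (@v i) l)) (all_lits i).

Lemma in_phi i l : List.In l (phi i) <-> red l /\ holds_lit (@v i) l.
Proof. by rewrite /phi List.filter_In in_all; split=> [[h /decP]|[h /decP]]. Qed.


Lemma holds_map (Y Z : Type) (w : Z -> CT) (f : Y -> Z) (l : lit L Y) :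
  holds_lit w (map_lit f l) <-> holds_lit (fun x => w (f x)) l.
Proof. by case: l => * /=; rewrite ?mt_comp. Qed.

Lemma holds_ext (Y : Type) (w1 w2 : Y -> CT) (l : lit L Y) :
  (forall x, w1 x = w2 x) -> holds_lit w1 l <-> holds_lit w2 l.
Proof. by move=> h; case: l => * /=; rewrite ?(mt_ext _ h) ?h. Qed.

Lemma join_ne i j : undup (s_ i ++ s_ j) <> [::] \/ (CT -> False).
Proof.
case: (sne_ i) => [h|h]; last by right.
left; move: h; case: (s_ i) => [//|a s] _ e.
have : a \in undup ((a :: s) ++ s_ j) by rewrite mem_undup mem_cat mem_head.
by rewrite e.
Qed.

Definition join i j := @Idx (undup (s_ i ++ s_ j)) (fs_ i ++ fs_ j) (cs_ i ++ cs_ j)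
  (undup_uniq _) (join_ne i j).

Lemma le_joinl i j : le i (join i j).
Proof.
split; first by move=> x h; rewrite /= mem_undup mem_cat h.
by split=> a h /=; apply: List.in_or_app; left.
Qed.

Lemma le_joinr i j : le j (join i j).
Proof.
split; first by move=> x h; rewrite /= mem_undup mem_cat h orbT.
by split=> a h /=; apply: List.in_or_app; right.
Qed.

Lemma single_ne (c : CT) : [:: c] <> [::] \/ (CT -> False). Proof. by left. Qed.
Definition single (c : CT) fs cs := @Idx [:: c] fs cs isT (single_ne c).

Definition D : dsys L := @DSys L idx le X (fun i F => List.In F (fs_ i))
  (fun i c => List.In c (cs_ i)) phi gam.


Definition x0s (c : CT) fs cs : X (single c fs cs) := @Ordinal 1 0 isT.

Lemma v_x0s c fs cs : v (x0s c fs cs) = c.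
Proof. by []. Qed.

Lemma D_direct : is_direct_system D.
Proof.
split.
  split.
    case: (classic (inhabited CT)) => [[c]|nc]; first exact: (inhabits (single c [::] [::])).
    constructor; apply: (@Idx [::] [::] [::] isT); right=> c; exact: nc (inhabits c).
  split; first by move=> i; split=> //; split; apply: List.incl_refl.
  split.
    move=> i j k [h1 [h2 h3]] [h1' [h2' h3']]; split; first by move=> x /h1 /h1'.
    by split; apply: List.incl_tran; eassumption.
  by move=> i j; exists (join i j); split; [apply: le_joinl | apply: le_joinr].
split.
  move=> i /=; split; first by exists (fs_ i).
  split; first by exists (cs_ i).
  split; first by move=> l /in_phi [].
  split; first by move=> x y nxy; apply/in_phi; split=> //= /v_inj.
  split.
    move=> F hF xs x0; rewrite !in_phi /=; split; first by move=> [_ h] [_ h'].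
    by move=> h; split=> //; apply: NNPP => h'; apply: h.
  move=> c hc x; rewrite !in_phi /=; split; first by move=> [_ h] [_ h'].
  by move=> h; split=> //; apply: NNPP => h'; apply: h.
split; first by move=> i; exists C, (@v i) => l /in_phi [].
split; first by move=> i x; exact: g_v.
split; first by move=> i j k hij hjk x /=; rewrite /gam v_gam.
split.
  move=> i j hij l /in_phi [hr hh]; apply/in_phi; split.
    case: hij => [_ [h2 h3]].
    by case: l hr hh => * /=; [| |apply: h2|apply: h2|apply: h3|apply: h3].
  by apply/holds_map; apply/(holds_ext l (fun x => @v_gam i j x hij)).
split.
  move=> c; exists (single (cint C c) [::] [:: c]), (x0s _ _ _).
  by apply/in_phi; split=> /=; [left|].
move=> F i xs /=.
pose c := fint C F (map_tuple (@v i) xs).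
pose j := @Idx (undup (s_ i ++ [:: c])) (F :: fs_ i) (cs_ i) (undup_uniq _) (join_ne i (single c [::] [::])).
have hij : le i j.
  split; first by move=> x h; rewrite /= mem_undup mem_cat h.
  by split=> a h //=; right.
exists j, (g j c); split => //.
apply/in_phi; split; first by left.
rewrite /= mt_comp (mt_ext _ (fun x => v_gam x hij)) v_g //.
by rewrite /= mem_undup mem_cat mem_head orbT.
Qed.


Definition pi (e : ds_elt D) : C := @v (projT1 e) (projT2 e).

Lemma D_limit : is_limit_algebra D C pi.
Proof.
split.
  by move=> a; exists (existT _ (single a [::] [::]) (x0s _ _ _)).
split.
  move=> [i x] [j y]; rewrite /pi /=; split.
    move=> e; exists (join i j); split; first exact: le_joinl.
    split; first exact: le_joinr.
    by apply: v_inj; rewrite /= !v_gam //; [apply: le_joinr|apply: le_joinl].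
  move=> [k [hi [hj e]]]; move: (f_equal (@v k) e) => /=.
  by rewrite !v_gam.
split.
  by move=> c i x /in_phi [_ /= h]; rewrite /pi /= h.
move=> F i j xs x0 hij /in_phi [_ /= h]; rewrite /pi /= -h mt_comp.
by congr (fint C F _); apply: mt_ext => x; rewrite v_gam.
Qed.

End Main.

Lemma iso_refl (L : language) (A : algebra L) : isomorphic A A.
Proof.
exists id; split; first by exists id.
split=> // F t; congr (fint A F _); apply: val_inj; by rewrite /= map_id.
Qed.

Definition lit_qf (L : language) (Y : Type) (l : lit L Y) : qf_formula L Y :=
  match l with
  | LEq x y => QEq (TVar L x) (TVar L y)
  | LNeq x y => QNot (QEq (TVar L x) (TVar L y))
  | LFun F xs x0 => QEq (TApp (fun k => TVar L (tnth xs k))) (TVar L x0)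
  | LNFun F xs x0 => QNot (QEq (TApp (fun k => TVar L (tnth xs k))) (TVar L x0))
  | LCst c x => QEq (TVar L x) (TCst Y c)
  | LNCst c x => QNot (QEq (TVar L x) (TCst Y c))
  end.

Lemma holds_lit_qf (L : language) (Y : Type) (A : algebra L) (w : Y -> A) l :
  holds_qf w (lit_qf l) <-> holds_lit w l.
Proof.
have e : forall (F : Fsym L) (xs : (ar F).-tuple Y),
    [tuple w (tnth xs k) | k < ar F] = map_tuple w xs.
  by move=> F xs; apply: eq_from_tnth => k; rewrite tnth_mktuple tnth_map.
by case: l => * /=; rewrite ?e.
Qed.

Lemma transfer (L : language) (B C : algebra L) : Th_ex_incl C B ->
  forall n (ph : conj_formula L 'I_n),
  (exists w : 'I_n -> C, sat w ph) -> exists w : 'I_n -> B, sat w ph.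
Proof.
move=> hTh [|m] ph [w hw].
  exists (fun k => ord0_absurd _ k).
  by move=> l _; case: l => [x y|x y|F xs x|F xs x|c x|c x]; exact: (ord0_absurd _ x).
have key : forall (A : algebra L) (u : 'I_m.+1 -> A) (ps : conj_formula L 'I_m.+1),
   holds_qf u (List.fold_right (@QAnd L 'I_m.+1) (QEq (TVar L ord0) (TVar L ord0))
   (List.map (@lit_qf L 'I_m.+1) ps)) <-> sat u ps.
  move=> A u ps; rewrite /sat; elim: ps => [|l ps IH] /=; first by split.
  rewrite IH holds_lit_qf; split.
    by move=> [h1 h2] l' [<-|/h2].
  by move=> h; split; [apply: h; left | move=> l' hl'; apply: h; right].
pose f := List.fold_right (@QAnd L 'I_m.+1) (QEq (TVar L ord0) (TVar L ord0))
   (List.map (@lit_qf L 'I_m.+1) ph).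
have [u hu] := hTh (@ExSentence L m.+1 f) (ex_intro _ w (proj2 (key C w ph) hw)).
by exists u; apply/(key B u ph).
Qed.

Theorem mainTheorem13 (L : language) (B C : algebra L) :
  Th_ex_incl C B ->
  exists (D : dsys L) (A : algebra L) (pi : ds_elt D -> A),
    is_direct_system D /\ sys_over D B /\ is_limit_algebra D A pi /\
    isomorphic C A.
Proof.
move=> hTh; exists (D C), C, (@pi L C); split; first exact: D_direct.
split; last by split; [exact: D_limit | exact: iso_refl].
move=> i; apply: (transfer hTh); by exists (@v L C i) => l /in_phi [].
Qed.
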